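(* Let $n\geq3$ and $\lambda=(\lambda_1,\dots,\lambda_n)\in\mathbb{R}^n$ with $\lambda_1+\dots+\lambda_n>0$ and $N(\lambda)=n$. Then \[\sum_{P\in\mathcal{P}^0_{ord}(\lambda)}(-1)^{|P|}\varepsilon(P)\varepsilon'(P)=0.\]
   Context: $s_J(\lambda)=\sum_{i\in J}\lambda_i$ for $J\subset\{1,\dots,n\}$. $\delta(\lambda)$ is the minimum of $s_J(\lambda)/|J|$ over subsets $J$ with $s_J(\lambda)>0$; when $\delta(\lambda)>0$, $N(\lambda)$ is the minimum of $|J|$ over subsets $J$ with $s_J(\lambda)/|J|=\delta(\lambda)$. Ordered partitions $P=(I_1,\dots,I_k)$ of $\{1,\dots,n\}$ into nonempty blocks, $|P|=k$. $\mathcal{P}_{ord}(\lambda)$: those with $s_{I_1}(\lambda)+\dots+s_{I_i}(\lambda)>0$ for all $i$. $\mathcal{P}^0_{ord}(\lambda)$: those in $\mathcal{P}_{ord}(\lambda)$ having at most one block of odd cardinality. $\varepsilon(P)=\mathrm{sgn}(\sigma_P)$, where $\sigma_P$ is the unique permutation with $\sigma_P^{-1}$ mapping $\{n_1+\dots+n_i+1,\dots,n_1+\dots+n_{i+1}\}$ increasingly onto $I_{i+1}$ ($n_i=|I_i|$); $\varepsilon'(P)=(-1)^{\frac12\sum_i|I_i|(|I_i|-1)}$. *)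

(* Defs.v *)
From HB Require Import structures.
From mathcomp Require Import all_boot all_order all_algebra all_fingroup.
Set Implicit Arguments. Unset Strict Implicit. Unset Printing Implicit Defensive.
Import Order.TTheory GRing.Theory Num.Theory.
Local Open Scope ring_scope.

Section Defs.
Variables (R : realFieldType) (n : nat).
Implicit Types (lam : 'I_n -> R) (J : {set 'I_n}).

Definition sJ lam J : R := \sum_(i in J) lam i.

(* delta(lambda) = min of s_J/|J| over J with s_J > 0 (the full set is
   among them whenever sum lambda > 0, so it serves as initial value). *)
Definition delta lam : R :=
  \big[Num.min/ sJ lam setT / (#|[set: 'I_n]|%:R)]_(J | 0 < sJ lam J)
     (sJ lam J / #|J|%:R).

Definition Nlam lam : nat :=
  \big[minn/n]_(J | (J != set0) && (sJ lam J / #|J|%:R == delta lam)) #|J|.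

Definition is_ord_partition k (P : k.-tuple {set 'I_n}) : bool :=
  [&& [forall i : 'I_k, tnth P i != set0],
      [forall i : 'I_k, forall j : 'I_k,
          (i != j) ==> [disjoint tnth P i & tnth P j]] &
      \bigcup_(i < k) tnth P i == setT].

Definition in_Pord lam k (P : k.-tuple {set 'I_n}) : bool :=
  is_ord_partition P &&
  [forall i : 'I_k, 0 < \sum_(j < k | (j <= i)%N) sJ lam (tnth P j)].

Definition in_P0ord lam k (P : k.-tuple {set 'I_n}) : bool :=
  in_Pord lam P && (count (fun B : {set 'I_n} => odd #|B|) (tval P) <= 1)%N.

(* The word sigma_P^{-1}(1), ..., sigma_P^{-1}(n): the blocks listed in
   order, each block increasingly. *)
Definition block_word k (P : k.-tuple {set 'I_n}) : seq 'I_n :=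
  flatten [seq [seq x <- enum 'I_n | x \in B] | B : {set 'I_n} <- tval P].

Definition sigmaP_inv_fun k (P : k.-tuple {set 'I_n}) (p : 'I_n) : 'I_n :=
  nth p (block_word P) p.

Definition eps k (P : k.-tuple {set 'I_n}) : R :=
  match [pick s : {perm 'I_n} | [forall p, s p == sigmaP_inv_fun P p]] with
  | Some s => (-1) ^+ odd_perm (s^-1)%g
  | None => 1
  end.

Definition eps' k (P : k.-tuple {set 'I_n}) : R :=
  (-1) ^+ (\sum_(B <- tval P) #|B| * (#|B| - 1))./2.

End Defs.

(* Main.v *)
Require Import Defs.
From HB Require Import structures.
From mathcomp Require Import all_boot all_order all_algebra all_fingroup.
From mathcomp Require Import zify ring lra.
Set Implicit Arguments. Unset Strict Implicit. Unset Printing Implicit Defensive.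
Import Order.TTheory GRing.Theory Num.Theory.
Local Open Scope ring_scope.

Section Generic.
Variables (R : realFieldType) (X : eqType).

Lemma sum_bij (L : seq X) (A B : pred X) (F G : X -> R) (h h' : X -> X) :
  uniq L ->
  (forall x, x \in L -> A x -> [/\ h x \in L, B (h x), h' (h x) = x & G (h x) = F x]) ->
  (forall y, y \in L -> B y -> [/\ h' y \in L, A (h' y) & h (h' y) = y]) ->
  \sum_(x <- L | A x) F x = \sum_(y <- L | B y) G y.
Proof.
move=> uL HA HB.
rewrite -big_filter -[RHS]big_filter.
have -> : \sum_(x <- [seq x <- L | A x]) F x = \sum_(x <- [seq x <- L | A x]) G (h x).
  apply: eq_big_seq => x; rewrite mem_filter => /andP[Ax xL].
  by have [_ _ _ ->] := HA x xL Ax.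
rewrite -(big_map h xpredT).
apply: perm_big; apply: uniq_perm.
- rewrite map_inj_in_uniq ?filter_uniq // => x y.
  rewrite !mem_filter => /andP[Ax xL] /andP[Ay yL] hxy.
  have [_ _ e1 _] := HA x xL Ax; have [_ _ e2 _] := HA y yL Ay.
  by rewrite -e1 hxy e2.
- by rewrite filter_uniq.
move=> y; apply/mapP/idP.
  move=> [x]; rewrite mem_filter => /andP[Ax xL] ->.
  by have [? ? _ _] := HA x xL Ax; rewrite mem_filter; apply/andP.
rewrite mem_filter => /andP[By yL].
have [? ? e] := HB y yL By.
by exists (h' y) => //; rewrite mem_filter; apply/andP.
Qed.

Lemma sum_invol (L : seq X) (A : pred X) (F : X -> R) (i : X -> X) :
  uniq L ->
  (forall x, x \in L -> A x -> [/\ i x \in L, A (i x), i (i x) = x & F (i x) = - F x]) ->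
  \sum_(x <- L | A x) F x = 0.
Proof.
move=> uL H.
have e : \sum_(x <- L | A x) F x = \sum_(x <- L | A x) (- F x).
  apply: (@sum_bij L A A F (fun x => - F x) i i) => //.
    by move=> x xL Ax; have [? ? ? e] := H x xL Ax; split => //; rewrite e opprK.
  by move=> y yL Ay; have [? ? ? e] := H y yL Ay; split.
move: e; rewrite sumrN => e.
have : 2 * \sum_(x <- L | A x) F x = 0 by rewrite mulr2n mulrDl mul1r {2}e subrr.
by move/eqP; rewrite mulf_eq0 pnatr_eq0 /= => /eqP.
Qed.

End Generic.

Definition blk n (B : {set 'I_n}) := [seq x <- enum 'I_n | x \in B].
Definition bwS n (s : seq {set 'I_n}) := flatten [seq blk B | B <- s].
Definition epsW (R : ringType) n (w : seq 'I_n) : R :=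
  match [pick p : {perm 'I_n} | [forall q, p q == nth q w q]] with
  | Some p => (-1) ^+ odd_perm (p^-1)%g
  | None => 1
  end.

Lemma eps_epsW (R : realFieldType) n k (P : k.-tuple {set 'I_n}) :
  eps R P = epsW R (bwS (tval P)).
Proof. by []. Qed.

Section Sign.
Variables (R : realFieldType) (n : nat).

Lemma epsW_perm (w : seq 'I_n) (p : {perm 'I_n}) :
  (forall q, p q = nth q w q) -> epsW R w = (-1) ^+ odd_perm p.
Proof.
move=> Hp; rewrite /epsW; case: pickP => [p' /forallP Hp'|/(_ p)].
  have -> : p' = p by apply/permP => q; rewrite Hp; apply/eqP/Hp'.
  by rewrite odd_permV.
by move/forallP; case => q; rewrite Hp.
Qed.

Lemma exists_perm (w : seq 'I_n) : perm_eq w (enum 'I_n) ->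
  exists p : {perm 'I_n}, forall q, p q = nth q w q.
Proof.
move=> pw.
have sw : size w = n by rewrite (perm_size pw) size_enum_ord.
have uw : uniq w by rewrite (perm_uniq pw) enum_uniq.
have inj : injective (fun q : 'I_n => nth q w q).
  move=> q1 q2 /= e.
  have l1 : (q1 < size w)%N by rewrite sw.
  have l2 : (q2 < size w)%N by rewrite sw.
  rewrite (set_nth_default q1 q2 l2) in e.
  by apply/val_inj/eqP; rewrite -(nth_uniq q1 l1 l2 uw) e.
by exists (perm inj) => q; rewrite permE.
Qed.

Lemma epsW_tperm (w : seq 'I_n) a b : perm_eq w (enum 'I_n) -> a != b ->
  epsW R (map (tperm a b) w) = - epsW R w.
Proof.
move=> pw ab; have [p Hp] := exists_perm pw.
have sw : size w = n by rewrite (perm_size pw) size_enum_ord.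
rewrite (epsW_perm Hp) (@epsW_perm _ (p * tperm a b)%g).
  by rewrite odd_permM odd_tperm ab signr_addb mulrN1.
move=> q; rewrite permM Hp.
have lq : (q < size w)%N by rewrite sw.
by rewrite (nth_map q) // (set_nth_default q _ lq).
Qed.

End Sign.

Section Rot.
Variables (R : realFieldType) (m : nat).
Local Notation n := m.+1.

Definition cyc : {perm 'I_n} := perm (bij_inj (@ordS_bij n)).

Lemma cycX j (q : 'I_n) : val ((cyc ^+ j)%g q) = ((q + j) %% n)%N.
Proof.
elim: j => [|j IH]; first by rewrite expg0 perm1 addn0 modn_small.
rewrite expgSr permM /cyc permE /= IH.
by rewrite -[(_ %% n).+1]addn1 modnDml -addnA addn1.
Qed.

Lemma odd_cyc : odd_perm cyc = ~~ odd n.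
Proof.
rewrite /odd_perm card_ord.
have -> : porbits cyc = [set porbit cyc ord0].
  apply/setP => X; rewrite in_set1; apply/imsetP/eqP => [[x _ ->]|->].
    have -> : x = (cyc ^+ x)%g ord0.
      by apply/val_inj; rewrite cycX /= add0n modn_small.
    by rewrite porbit_perm.
  by exists ord0.
by rewrite cards1 /= addbT.
Qed.

Lemma odd_cycX j : odd_perm (cyc ^+ j)%g = odd j && ~~ odd n.
Proof.
elim: j => [|j IH]; first by rewrite expg0 odd_perm1.
rewrite expgSr odd_permM IH odd_cyc /=.

by case: (odd j); case: (odd m).
Qed.

Lemma epsW_rot (w : seq 'I_n) j : perm_eq w (enum 'I_n) -> (j <= n)%N ->
  epsW R (rot j w) = (-1) ^+ (odd j && ~~ odd n) * epsW R w.
Proof.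
move=> pw jn; have [p Hp] := exists_perm pw.
have sw : size w = n by rewrite (perm_size pw) size_enum_ord.
rewrite (@epsW_perm R _ _ _ Hp) (@epsW_perm R _ _ (cyc ^+ j * p)%g).
  by rewrite odd_permM odd_cycX signr_addb.
move=> q; rewrite permM Hp.
set q' := (cyc ^+ j)%g q.
have lq' : (q' < size w)%N by rewrite sw.
rewrite (set_nth_default q _ lq').
have lq : (q < n)%N by [].
rewrite /rot nth_cat size_drop sw.
case: ltnP => h.
  rewrite nth_drop; congr nth; rewrite /q' cycX modn_small //; lia.
rewrite nth_take; last lia.
congr nth; rewrite /q' cycX.
have -> : (q + j = 1 * n + (q - (n - j)))%N by lia.
rewrite modnMDl modn_small //; lia.
Qed.

End Rot.

Definition partS n (s : seq {set 'I_n}) :=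
  (set0 \notin s) && [forall x : 'I_n, count (fun B : {set 'I_n} => x \in B) s == 1%N].
Definition oddcnt n (s : seq {set 'I_n}) := (count (fun B : {set 'I_n} => odd #|B|) s <= 1)%N.
Definition posb (R : realFieldType) (b : seq R) :=
  all (fun i => 0 < \sum_(x <- take i.+1 b) x) (iota 0 (size b)).
Definition posS (R : realFieldType) n (lam : 'I_n -> R) (s : seq {set 'I_n}) :=
  posb (map (sJ lam) s).
Definition eps'S (R : ringType) n (s : seq {set 'I_n}) : R :=
  (-1) ^+ (\sum_(B <- s) #|B| * (#|B| - 1))./2.
Definition FS (R : ringType) n (s : seq {set 'I_n}) : R :=
  (-1) ^+ size s * epsW R (bwS s) * eps'S R s.
Definition okS (R : realFieldType) n (lam : 'I_n -> R) (s : seq {set 'I_n}) :=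
  in_P0ord lam (in_tuple s).

Section Char.
Variables (R : realFieldType) (n : nat) (lam : 'I_n -> R).

Lemma in_P0ord_tuple k (P : k.-tuple {set 'I_n}) :
  in_P0ord lam P = okS lam (tval P).
Proof.
case: P => s Hs /=; have Hk : size s = k := eqP Hs; subst k.
by rewrite /okS; congr (in_P0ord lam _); apply: val_inj.
Qed.

Lemma FS_tuple k (P : k.-tuple {set 'I_n}) :
  (-1) ^+ k * eps R P * eps' R P = FS R (tval P).
Proof. by rewrite /FS size_tuple. Qed.

Lemma count_card (T : Type) (x0 : T) (p : pred T) (s : seq T) :
  count p s = #|[set i : 'I_(size s) | p (nth x0 s i)]|.
Proof.
rewrite -sum1_count (big_nth x0) big_mkord -sum1_card.
by apply: eq_bigl => i; rewrite inE.
Qed.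

Lemma is_ord_partitionE (s : seq {set 'I_n}) :
  is_ord_partition (in_tuple s) = partS s.
Proof.
rewrite /is_ord_partition /partS.
have E1 : [forall i, tnth (in_tuple s) i != set0] = (set0 \notin s).
  apply/forallP/idP => [H|H i].
    apply/negP => /(nthP set0) [i li ei].
    by move: (H (Ordinal li)); rewrite (tnth_nth set0) /= ei eqxx.
  rewrite (tnth_nth set0); apply: contraNneq H => <-.
  by apply: mem_nth; rewrite /= (ltn_ord i).
rewrite E1; case: (set0 \notin s) => //=.
apply/andP/forallP => [[/forallP Hd /eqP Hc] x|H].
  rewrite (count_card set0); apply/cards1P.
  have : x \in \bigcup_(i < size s) tnth (in_tuple s) i by rewrite Hc inE.
  case/bigcupP => i _ xi; exists i; apply/setP => j; rewrite !inE.
  rewrite (tnth_nth set0) /= in xi.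
  apply/idP/eqP => [xj|->] //.
  apply/eqP; apply: contraTT (Hd i) => ij; apply/forallP => /(_ j).
  rewrite eq_sym ij /= => /disjoint_setI0 /setP /(_ x).
  by rewrite !inE !(tnth_nth set0) /= xi xj.
split.
  apply/forallP => i; apply/forallP => j; apply/implyP => ij.
  rewrite -setI_eq0; apply/eqP/setP => x; rewrite !inE.
  apply/negP => /andP[xi xj].
  rewrite !(tnth_nth set0) /= in xi xj.
  move: (H x); rewrite (count_card set0) => /cards1P [l El].
  have : i \in [set l] by rewrite -El inE.
  have : j \in [set l] by rewrite -El inE.
  by rewrite !inE => /eqP ej /eqP ei; rewrite ej ei eqxx in ij.
apply/eqP/setP => x; rewrite inE; apply/bigcupP.
move: (H x); rewrite (count_card set0) => /cards1P [l El].
exists l => //; have : l \in [set l] by rewrite inE.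
by rewrite -El inE (tnth_nth set0).
Qed.

Lemma sum_take (b : seq R) i : (i <= size b)%N ->
  \sum_(x <- take i b) x = \sum_(j < size b | (j < i)%N) b`_j.
Proof.
move=> ib; rewrite (big_nth 0) size_takel // big_mkord.
rewrite (@big_ord_widen_cond _ _ _ i (size b) xpredT) //.
by apply: eq_bigr => j /= ji; rewrite nth_take.
Qed.

Lemma posE (s : seq {set 'I_n}) :
  [forall i : 'I_(size s), 0 < \sum_(j < size s | (j <= i)%N)
      sJ lam (tnth (in_tuple s) j)] = posS lam s.
Proof.
have E : forall i : 'I_(size s), \sum_(j < size s | (j <= i)%N)
      sJ lam (tnth (in_tuple s) j) =
   \sum_(x <- take i.+1 (map (sJ lam) s)) x.
  move=> i; rewrite sum_take size_map ?(ltn_ord i) //.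
  by apply: eq_bigr => j _; rewrite (nth_map set0) // (tnth_nth set0).
rewrite /posS /posb size_map; apply/forallP/allP => [H i|H i].
  rewrite mem_iota add0n => /andP[_ li].
  by move: (H (Ordinal li)); rewrite E.
by have := H i; rewrite mem_iota /= (ltn_ord i) E => /(_ isT).
Qed.

Lemma okS_char (s : seq {set 'I_n}) :
  okS lam s = [&& partS s, posS lam s & oddcnt s].
Proof.
by rewrite /okS /in_P0ord /in_Pord is_ord_partitionE posE /oddcnt andbA.
Qed.

End Char.

Section Part.
Variables (R : realFieldType) (n : nat) (lam : 'I_n -> R).
Implicit Types (s t : seq {set 'I_n}).

Lemma uniq_blk (B : {set 'I_n}) : uniq (blk B).
Proof. by rewrite filter_uniq ?enum_uniq. Qed.

Lemma mem_blk (B : {set 'I_n}) x : (x \in blk B) = (x \in B).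
Proof. by rewrite mem_filter mem_enum andbT. Qed.

Lemma size_blk (B : {set 'I_n}) : size (blk B) = #|B|.
Proof.
rewrite -(card_uniqP (uniq_blk B)); apply: eq_card => x.
by rewrite mem_blk.
Qed.

Lemma bwS_cons B s : bwS (B :: s) = blk B ++ bwS s.
Proof. by []. Qed.

Lemma bwS_cat s t : bwS (s ++ t) = bwS s ++ bwS t.
Proof. by rewrite /bwS map_cat flatten_cat. Qed.

Lemma count_bwS x s : count_mem x (bwS s) = count (fun B : {set 'I_n} => x \in B) s.
Proof.
elim: s => [|B s IH] //=; rewrite bwS_cons count_cat IH.
by rewrite count_uniq_mem ?uniq_blk // mem_blk.
Qed.

Lemma size_bwS s : size (bwS s) = (\sum_(B <- s) #|B|)%N.
Proof.
elim: s => [|B s IH]; first by rewrite big_nil.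
by rewrite bwS_cons size_cat IH big_cons size_blk.
Qed.

Lemma part_perm s : partS s -> perm_eq (bwS s) (enum 'I_n).
Proof.
case/andP => _ /forallP H; apply/allP => x _; rewrite /= count_bwS.
by rewrite (eqP (H x)) count_uniq_mem ?enum_uniq // mem_enum.
Qed.

Lemma part_size s : partS s -> (size s <= n)%N.
Proof.
move=> ps; have := perm_size (part_perm ps); rewrite size_enum_ord size_bwS => e.
rewrite -[X in (_ <= X)%N]e; clear e.
case/andP: ps => H _; elim: s H => [|B s IH] //=.
rewrite inE negb_or big_cons => /andP[B0 H].
have : (0 < #|B|)%N by rewrite card_gt0 eq_sym.
by move=> h2; rewrite -add1n; apply: leq_add => //; apply: IH.
Qed.

Lemma sum_sJ t : \sum_(B <- t) sJ lam B =
  \sum_x (count (fun B : {set 'I_n} => x \in B) t)%:R * lam x.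
Proof.
elim: t => [|B t IH]; first by rewrite big_nil big1 // => x _; rewrite mul0r.
rewrite big_cons IH /sJ big_mkcond /= -big_split /=.
apply: eq_bigr => x _; rewrite natrD mulrDl; congr (_ + _).
by case: (x \in B); rewrite ?mul1r ?mul0r.
Qed.

Lemma sum_part s : partS s -> \sum_(B <- s) sJ lam B = \sum_x lam x.
Proof.
case/andP => _ /forallP H; rewrite sum_sJ; apply: eq_bigr => x _.
by rewrite (eqP (H x)) mul1r.
Qed.

Lemma sum_sub t : (forall x, count (fun B : {set 'I_n} => x \in B) t <= 1)%N ->
  \sum_(B <- t) sJ lam B = sJ lam [set x | count (fun B : {set 'I_n} => x \in B) t == 1%N].
Proof.
move=> H; rewrite sum_sJ /sJ [RHS]big_mkcond /=; apply: eq_bigr => x _.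
rewrite inE; move: (H x); case: (count _ t) => [|[|//]] _ /=.
  by rewrite mul0r.
by rewrite mul1r.
Qed.

Lemma sJT : sJ lam setT = \sum_x lam x.
Proof. by rewrite /sJ; apply: eq_bigl => x; rewrite inE. Qed.

Lemma sJC J : sJ lam J + sJ lam (~: J) = \sum_x lam x.
Proof.
rewrite /sJ [RHS](bigID (fun x => x \in J)) /=; congr (_ + _).
by apply: eq_bigl => x; rewrite inE.
Qed.

Lemma sJ0 : sJ lam set0 = 0.
Proof. by rewrite /sJ big_pred0 // => x; rewrite inE. Qed.

Lemma gen_of_N : 0 < \sum_x lam x -> Nlam lam = n ->
  forall J, ~~ ((0 < sJ lam J) && (sJ lam J < \sum_x lam x)).
Proof.
move=> Spos HN.
set S := \sum_x lam x.
pose ratio J := sJ lam J / #|J|%:R.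
have n0 : (0 < n)%N.
  case: n lam @S Spos {HN} => // l S'; rewrite /S' big_ord0 ltxx //.
have Ha : forall J, 0 < sJ lam J -> delta lam <= ratio J.
  by move=> J HJ; apply: bigmin_le_cond.
have HT : 0 < sJ lam setT by rewrite sJT.
pose J0 := Order.arg_min setT (fun J => 0 < sJ lam J) ratio.
have [HJ0 HminJ0] : 0 < sJ lam J0 /\ forall J, 0 < sJ lam J -> ratio J0 <= ratio J.
  by rewrite /J0; case: (@Order.TotalTheory.arg_minP _ _ _ setT (fun J => 0 < sJ lam J) ratio HT) => J hJ hm; split.
have Hd : delta lam = ratio J0.
  apply/le_anti; rewrite Ha //=.
  apply: le_bigmin => [|J HJ]; last exact: HminJ0.
  by have := HminJ0 _ HT; rewrite /ratio cardsT card_ord.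
have HNle : forall J : {set 'I_n}, J != set0 -> ratio J = delta lam -> (n <= #|J|)%N.
  move=> J J0' rJ; rewrite -{1}HN /Nlam -minEnat.
  by rewrite -leEnat; apply: bigmin_le_cond; rewrite J0' /= -/(ratio J) rJ eqxx.
have cardT : forall J : {set 'I_n}, (n <= #|J|)%N -> J = setT.
  move=> J HJ; suff : J == setT by move/eqP.
  by rewrite eqEcard subsetT cardsT card_ord.
have J0T : J0 = setT.
  apply: cardT; apply: HNle; last by rewrite Hd.
  by apply: contraTneq HJ0 => ->; rewrite sJ0 ltxx.
have Hgt : forall J, 0 < sJ lam J -> J != setT -> S / n%:R < ratio J.
  move=> J HJ JT; rewrite lt_neqAle.
  have -> : S / n%:R = delta lam by rewrite Hd J0T /ratio sJT cardsT card_ord.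
  rewrite Ha // andbT; apply/negP => /eqP e.
  have := HNle J _ (esym e).
  have J0' : J != set0 by apply: contraTneq HJ => ->; rewrite sJ0 ltxx.
  by move/(_ J0') => /cardT; apply/eqP.
move=> J; apply/negP => /andP[h1 h2].
have hc := sJC J; rewrite -/S in hc.
have JT : J != setT by apply: contraTneq h2 => ->; rewrite sJT ltxx.
have JcT : ~: J != setT.
  apply: contraTneq h1 => e; have : J = set0 by rewrite -[J]setCK e setCT.
  by move=> ->; rewrite sJ0 ltxx.
have h3 : 0 < sJ lam (~: J) by lra.
have g1 := Hgt J h1 JT; have g2 := Hgt _ h3 JcT.
have cJ : (0 < #|J|)%N.
  by rewrite card_gt0; apply: contraTneq h1 => ->; rewrite sJ0 ltxx.
have cJc : (0 < #|~: J|)%N.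
  by rewrite card_gt0; apply: contraTneq h3 => ->; rewrite sJ0 ltxx.
have cs := cardsC J; rewrite card_ord in cs.
rewrite /ratio ltr_pdivlMr ?ltr0n // in g1.
rewrite /ratio ltr_pdivlMr ?ltr0n // in g2.
rewrite mulrAC ltr_pdivrMr ?ltr0n // in g1.
rewrite mulrAC ltr_pdivrMr ?ltr0n // in g2.
have e1 : S * #|J|%:R + S * #|~: J|%:R = S * n%:R by rewrite -mulrDr -natrD cs.
have e2 : sJ lam J * n%:R + sJ lam (~: J) * n%:R = S * n%:R by rewrite -mulrDl hc.
lra.
Qed.

End Part.

Section Cycle.
Variable R : realFieldType.
Implicit Types b : seq R.

Definition psum b i := \sum_(x <- take i b) x.

Lemma psum_rot b r j : (r <= size b)%N -> (j <= size b)%N ->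
  psum (rot r b) j =
  if (j <= size b - r)%N then psum b (r + j) - psum b r
  else \sum_(x <- b) x - psum b r + psum b (j - (size b - r)).
Proof.
move=> rb jb; rewrite /psum /rot take_cat size_drop.
have Ed : \sum_(x <- drop r b) x = \sum_(x <- b) x - \sum_(x <- take r b) x.
  by rewrite -{2}(cat_take_drop r b) big_cat /= addrC addrK.
case: ltnP => h.
  rewrite ifT; last lia.
  by rewrite takeD big_cat /= addrC addrK.
case: leqP => h2.
  have -> : j = (size b - r)%N by lia.
  rewrite subnn take0 cats0 Ed.
  by rewrite subnKC // [take (size b) b]take_oversize.
rewrite big_cat /= Ed take_takel //; lia.
Qed.

Lemma cycle_exists b : (0 < size b)%N -> 0 < \sum_(x <- b) x ->
  exists2 r, (r < size b)%N & posb (rot r b).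
Proof.
move=> b0 Spos; set k := size b.
have [k' ek] : exists k', k = k'.+1 by exists k.-1; lia.
pose P (i : 'I_k) := psum b i.
have ord0k : (0 < k)%N by [].
pose z := Ordinal ord0k.
pose i1 := Order.arg_min z xpredT P.
have Hi1 : forall i, P i1 <= P i.
  by rewrite /i1; case: (@Order.TotalTheory.arg_minP _ _ _ z xpredT P isT) => i _ H j; apply: H.
pose r := [arg max_(i > i1 | P i == P i1) (i : nat)].
have [Hr1 Hr2] : P r == P i1 /\ forall i, P i == P i1 -> (i <= r)%N.
  by rewrite /r; case: arg_maxnP => // i Hi H; split => // j /H.
have Pr0 : P r <= 0.
  by rewrite (eqP Hr1); apply: le_trans (Hi1 z) _; rewrite /P /psum take0 big_nil.
have HPi : forall i : nat, (i < k)%N -> P r <= psum b i.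
  by move=> i ik; rewrite (eqP Hr1); apply: (Hi1 (Ordinal ik)).
have HPgt : forall i : nat, (r < i < k)%N -> P r < psum b i.
  move=> i /andP[ri ik]; rewrite lt_neqAle HPi // andbT.
  apply/negP => /eqP e; have := Hr2 (Ordinal ik); rewrite /= -(eqP Hr1) e eqxx.
  by move/(_ isT); lia.
exists r; first exact: ltn_ord.
apply/allP => i; rewrite size_rot mem_iota add0n => /andP[_ ik].
have := @psum_rot b r i.+1 (ltnW (ltn_ord r)) ik; rewrite /psum => ->.
rewrite -/k; case: ifP => h.
  rewrite subr_gt0.
  have [e|ne] := eqVneq (r + i.+1)%N k.
    rewrite e [take k b]take_oversize //.
    by move: Pr0; rewrite /P /psum; lra.
  apply: HPgt; apply/andP; split; first lia.
  by rewrite ltn_neqAle ne /=; move: h; clear; lia.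
have : P r <= psum b (i.+1 - (k - r)) by apply: HPi; have := ltn_ord r; move: h ik; rewrite /k; clear; lia.
rewrite /P /psum; lra.
Qed.

End Cycle.

Lemma odd_sum_card n (t : seq {set 'I_n}) :
  odd (\sum_(B <- t) #|B|) = odd (count (fun B : {set 'I_n} => odd #|B|) t).
Proof.
elim: t => [|B t IH]; first by rewrite big_nil.
by rewrite big_cons /= oddD IH oddD; case: (odd #|B|).
Qed.

Lemma nth_rot0 (T : Type) (d : T) (s : seq T) i : (i < size s)%N ->
  nth d (rot i s) 0 = nth d s i.
Proof.
move=> hi; rewrite /rot nth_cat size_drop subn_gt0 hi nth_drop addn0 //.
Qed.

Lemma rot_rot2 (T : Type) (s : seq T) a b : exists j, rot a (rot b s) = rot j s.
Proof. by exists (rot_add s b a); rewrite rot_rot_add. Qed.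

Section Rotation.
Variables (R : realFieldType) (m : nat).
Local Notation n := m.+1.
Variables (lam : 'I_n -> R) (x0 : 'I_n).
Hypothesis Spos : 0 < \sum_x lam x.
Hypothesis Gen : forall J, ~~ ((0 < sJ lam J) && (sJ lam J < \sum_x lam x)).
Implicit Types s t : seq {set 'I_n}.

Lemma partS_rot j s : partS (rot j s) = partS s.
Proof.
have p : perm_eq (rot j s) s by rewrite perm_rot.
rewrite /partS (perm_mem p); congr (_ && _); apply: eq_forallb => x.
by rewrite (seq.permP p).
Qed.

Lemma oddS_rot j s : oddcnt (rot j s) = oddcnt s.
Proof.
have p : perm_eq (rot j s) s by rewrite perm_rot.
by rewrite /oddcnt (seq.permP p).
Qed.

Lemma FS_rot j s : partS s -> oddcnt s -> FS R (rot j s) = FS R s.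
Proof.
move=> ps os.
have [js|js] := leqP (size s) j; first by rewrite rot_oversize.
have pe : eps'S R (rot j s) = eps'S R s.
  by rewrite /eps'S (perm_big _ (_ : perm_eq (rot j s) s)) // perm_rot.
rewrite /FS size_rot pe; congr (_ * _ * _).
have -> : bwS (rot j s) = rot (size (bwS (take j s))) (bwS s).
  rewrite {1}/rot bwS_cat.
  by rewrite -[in bwS s](cat_take_drop j s) bwS_cat rot_size_cat.
have pp := part_perm ps.
have sz : size (bwS s) = n by rewrite (perm_size pp) size_enum_ord.
rewrite epsW_rot //; last first.
  by rewrite -[X in (_ <= X)%N]sz -[in bwS s](cat_take_drop j s) bwS_cat size_cat leq_addr.
suff -> : odd (size (bwS (take j s))) && ~~ odd n = false by rewrite mul1r.
move: sz; rewrite -{1}(cat_take_drop j s) bwS_cat size_cat => sz.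
rewrite -[X in ~~ odd X]sz !size_bwS oddD !odd_sum_card.
move: os; rewrite /oddcnt -{1}(cat_take_drop j s) count_cat.
by case: (count _ (take j s)) => [|[|]] //=; case: (count _ _) => [|[|]].
Qed.

Lemma count_take_le (p : pred {set 'I_n}) s j :
  (count p (take j s) <= count p s)%N /\ (count p (drop j s) <= count p s)%N.
Proof.
by rewrite -{2 4}(cat_take_drop j s) count_cat; split; [apply: leq_addr|apply: leq_addl].
Qed.

Lemma rot_uniq_pos s j : partS s -> posS lam s -> posS lam (rot j s) ->
  rot j s = s.
Proof.
move=> ps p1 p2.
have [js|js] := leqP (size s) j; first by rewrite rot_oversize.
have [->|j0] := posnP j; first by rewrite rot0.
exfalso.
have cnt : forall t, (t = take j s \/ t = drop j s) ->
    forall x, (count (fun B : {set 'I_n} => x \in B) t <= 1)%N.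
  move=> t ht x; case/andP: ps => _ /forallP /(_ x) /eqP <-.
  by have [h1 h2] := count_take_le (fun B : {set 'I_n} => x \in B) s j; case: ht => ->.
have g : forall t, (t = take j s \/ t = drop j s) ->
    0 < \sum_(B <- t) sJ lam B -> \sum_x lam x <= \sum_(B <- t) sJ lam B.
  move=> t ht pos; rewrite (sum_sub lam (cnt t ht)).
  have := Gen [set x | count (fun B : {set 'I_n} => x \in B) t == 1%N].
  rewrite -(sum_sub lam (cnt t ht)) pos /= -leNgt //.
have q1 : 0 < \sum_(B <- take j s) sJ lam B.
  move: p1; rewrite /posS /posb size_map => /allP /(_ j.-1).
  rewrite mem_iota add0n prednK // => /(_ ltac:(apply/andP; split; [done| exact: ltnW])).
  by rewrite -map_take big_map.
have q2 : 0 < \sum_(B <- drop j s) sJ lam B.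
  move: p2; rewrite /posS /posb size_map size_rot => /allP /(_ (size s - j).-1).
  rewrite mem_iota add0n prednK; last lia.
  move/(_ ltac:(lia)); rewrite map_rot /rot take_cat size_drop size_map ltnn subnn take0 cats0.
  by rewrite -map_drop big_map.
have e := sum_part lam ps; rewrite -(cat_take_drop j s) big_cat /= in e.
have := g _ (or_introl erefl) q1; have := g _ (or_intror erefl) q2.
lra.
Qed.

Lemma rot_uniq_head s j : partS s -> x0 \in nth set0 s 0 ->
  x0 \in nth set0 (rot j s) 0 -> rot j s = s.
Proof.
move=> ps h1 h2.
have [js|js] := leqP (size s) j; first by rewrite rot_oversize.
have [->|j0] := posnP j; first by rewrite rot0.
exfalso; rewrite nth_rot0 // in h2.
case/andP: ps => _ /forallP /(_ x0).
case: s h1 h2 js => [|B s] //= h1 h2 js.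
rewrite h1 add1n eqSS eqn0Ngt -has_count => /negP; apply; apply/hasP.
exists (nth set0 s j.-1); last by move: h2; rewrite -{1}(prednK j0).
by apply: mem_nth; rewrite -ltnS prednK.
Qed.

Lemma part_nonempty s : partS s -> (0 < size s)%N.
Proof.
case/andP => _ /forallP /(_ x0); case: s => //.
Qed.

Definition hrot s := rot (find (fun B : {set 'I_n} => x0 \in B) s) s.
Definition rpos s := find (fun r => posS lam (rot r s)) (iota 0 (size s)).
Definition hrot' s := rot (rpos s) s.

Lemma hrot_head s : partS s -> x0 \in nth set0 (hrot s) 0.
Proof.
move=> ps; have hs : has (fun B : {set 'I_n} => x0 \in B) s.
  by rewrite has_count; case/andP: ps => _ /forallP /(_ x0) /eqP ->.
rewrite /hrot nth_rot0 -?has_find //.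
exact: (nth_find set0 hs).
Qed.

Lemma hrot'_pos s : partS s -> posS lam (hrot' s).
Proof.
move=> ps.
have [r rs pr] : exists2 r, (r < size s)%N & posb (rot r (map (sJ lam) s)).
  have := @cycle_exists R (map (sJ lam) s); rewrite size_map big_map sum_part //.
  by move/(_ (part_nonempty ps) Spos).
have hs : has (fun r => posS lam (rot r s)) (iota 0 (size s)).
  by apply/hasP; exists r; rewrite ?mem_iota // /posS map_rot.
have := nth_find 0 hs; rewrite nth_iota -?size_iota -?has_find //.
by rewrite -[X in (_ < X)%N](size_iota 0) -has_find.
Qed.

Lemma step1 (L : seq (seq {set 'I_n})) :
  uniq L -> (forall s, (s \in L) = (size s <= n)%N) ->
  \sum_(s <- L | [&& partS s, posS lam s & oddcnt s]) FS R s =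
  \sum_(s <- L | [&& partS s, oddcnt s & x0 \in nth set0 s 0]) FS R s.
Proof.
move=> uL Lm.
apply: (@sum_bij R _ L _ _ _ _ hrot hrot') => //.
  move=> s sL /and3P[ps pos os]; split.
  - by rewrite Lm size_rot -Lm.
  - by rewrite /hrot partS_rot oddS_rot ps os hrot_head.
  - rewrite /hrot'; set u := hrot s.
    have pu : partS u by rewrite /u /hrot partS_rot.
    have := hrot'_pos pu; rewrite /hrot'.
    rewrite /u /hrot; have [j ->] := rot_rot2 s (rpos (hrot s)) (find (fun B : {set 'I_n} => x0 \in B) s).
    by move=> pj; apply: rot_uniq_pos.
  - by rewrite /hrot FS_rot.
move=> t tL /and3P[pt ot ht]; split.
- by rewrite Lm size_rot -Lm.
- by rewrite /hrot' partS_rot oddS_rot pt ot andbT hrot'_pos.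
- set u := hrot' t.
  have pu : partS u by rewrite /u /hrot' partS_rot.
  have := hrot_head pu; rewrite /hrot /u /hrot'.
  have [j ->] := rot_rot2 t (find (fun B : {set 'I_n} => x0 \in B) (rot (rpos t) t)) (rpos t).
  by move=> hj; apply: rot_uniq_head.
Qed.

End Rotation.

Section Invol.
Variables (R : realFieldType) (m : nat).
Local Notation n := m.+3.
Implicit Types (s t pre post : seq {set 'I_n}) (A X : {set 'I_n}).

Definition MM : 'I_n := ord_max.
Definition MM' : 'I_n := @Ordinal n m.+1 (leqnSn m.+2).
Definition x0 : 'I_n := ord0.
Definition DD : {set 'I_n} := [set MM; MM'].
Definition tau := tperm MM MM'.

Lemma MM_neq : MM != MM'. Proof. by apply/eqP => /(congr1 val) /=; lia. Qed.
Lemma x0_notin_D : x0 \notin DD.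
Proof. by rewrite !inE; apply/norP; split; apply/eqP => /(congr1 val) /=. Qed.
Lemma card_D : #|DD| = 2%N. Proof. by rewrite cards2 MM_neq. Qed.

Definition ltI (x y : 'I_n) := (x < y)%N.

Lemma sorted_blk (B : {set 'I_n}) : sorted ltI (blk B).
Proof.
apply: sorted_filter; first by move=> x y z; rewrite /ltI; apply: ltn_trans.
by have := iota_ltn_sorted 0 n; rewrite -val_enum_ord sorted_map.
Qed.

Lemma blk_eq (B : {set 'I_n}) (w : seq 'I_n) : sorted ltI w -> w =i B -> blk B = w.
Proof.
move=> sw ew; apply: (@irr_sorted_eq _ ltI) => //.
- by move=> x y z; rewrite /ltI; apply: ltn_trans.
- by move=> x; rewrite /ltI ltnn.
- exact: sorted_blk.
by move=> x; rewrite mem_blk ew.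
Qed.

Lemma blkU (A : {set 'I_n}) : MM \notin A -> MM' \notin A ->
  blk (A :|: DD) = blk A ++ blk DD.
Proof.
move=> hM hM'; apply: blk_eq; last first.
  by move=> x; rewrite mem_cat !mem_blk !inE.
rewrite sorted_pairwise; last by move=> x y z; rewrite /ltI; apply: ltn_trans.
rewrite pairwise_cat -!sorted_pairwise ?sorted_blk ?andbT;
  try by move=> x y z; rewrite /ltI; apply: ltn_trans.
apply/allrelP => x y; rewrite !mem_blk !inE => xA /orP[] /eqP ->; rewrite /ltI /=.
  have : x != MM by apply: contraNneq hM => <-.
  move/eqP => h; have := ltn_ord x.
  have : (x : nat) <> m.+2 by move=> e; apply: h; apply: val_inj.
  lia.
have : x != MM by apply: contraNneq hM => <-.
have : x != MM' by apply: contraNneq hM' => <-.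
move/eqP => h1 /eqP h2; have := ltn_ord x.
have : (x : nat) <> m.+2 by move=> e; apply: h2; apply: val_inj.
have : (x : nat) <> m.+1 by move=> e; apply: h1; apply: val_inj.
lia.
Qed.

Lemma MR pre post (A : {set 'I_n}) : A != set0 -> MM \notin A -> MM' \notin A ->
  [/\ partS (pre ++ A :: DD :: post) = partS (pre ++ (A :|: DD) :: post),
      oddcnt (pre ++ A :: DD :: post) = oddcnt (pre ++ (A :|: DD) :: post),
      (x0 \in nth set0 (pre ++ A :: DD :: post) 0) =
        (x0 \in nth set0 (pre ++ (A :|: DD) :: post) 0) &
      FS R (pre ++ (A :|: DD) :: post) = - FS R (pre ++ A :: DD :: post)].
Proof.
move=> A0 hM hM'.
have AD : forall x, x \in A -> x \in DD -> False.
  by move=> x xA; rewrite !inE => /orP[] /eqP e; subst x; [move: hM | move: hM']; rewrite xA.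
have cU : #|A :|: DD| = (#|A| + 2)%N.
  rewrite cardsU card_D; suff -> : A :&: DD = set0 by rewrite cards0 subn0.
  apply/setP => x; rewrite !inE; case: eqP => [->|_]; first by rewrite (negbTE hM).
  by case: eqP => [->|_]; [rewrite (negbTE hM') | rewrite andbF].
have D0 : DD != set0 by apply/set0Pn; exists MM; rewrite !inE eqxx.
split.
- rewrite /partS !mem_cat !inE eq_sym (negbTE A0) eq_sym (negbTE D0) /=.
  have U0 : (set0 == A :|: DD) = false by rewrite eq_sym setU_eq0 (negbTE A0).
  rewrite U0 /=; congr (_ && _); apply: eq_forallb => x.
  have cnt : ((x \in A) + (x \in DD))%N = (x \in A :|: DD).
    rewrite [in RHS]inE; case xA: (x \in A); case xD: (x \in DD) => //.
    by case: (AD x).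
  by rewrite !count_cat /= -cnt !addnA.
- rewrite /oddcnt !count_cat /= cU card_D oddD /= addbF.
  by rewrite addnA.
- case: pre => [|B pre] //=; rewrite inE.
  by have := x0_notin_D; case: (x0 \in DD); rewrite ?orbF.
rewrite /FS !size_cat /= !bwS_cat !bwS_cons blkU // -catA.
rewrite /eps'S !big_cat !big_cons /= cU card_D.
set X := (\sum_(i <- pre) _)%N; set Y := (\sum_(i <- post) _)%N.
have -> : ((#|A| + 2) * (#|A| + 2 - 1) = #|A| * (#|A| - 1) + 2 * 1 + (4 * #|A|))%N.
  case: #|A| => [|a]; first by [].
  rewrite !addn2 /= !subn1 /= mulSn !mulnS /=; nia.
have -> : (X + (#|A| * (#|A| - 1) + 2 * 1 + 4 * #|A| + Y) =
     (X + (#|A| * (#|A| - 1) + (2 * (2 - 1) + Y))) + (4 * #|A|))%N by lia.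
rewrite halfD.
have -> : odd (4 * #|A|) = false by rewrite oddM.
rewrite andbF add0n.
have -> : ((4 * #|A|)./2 = 2 * #|A|)%N.
  have -> : (4 * #|A| = (2 * #|A|).*2)%N by rewrite -mul2n mulnA.
  by rewrite doubleK.
rewrite (exprD _ _ (2 * #|A|)%N) exprM sqrrN !expr1n mulr1 !exprD !exprS; ring.
Qed.


Definition both (B : {set 'I_n}) := (MM \in B) && (MM' \in B).
Definition swp (B : {set 'I_n}) : {set 'I_n} := tau @: B.

Definition invol s :=
  if has both s then
    (if #|nth set0 s (find both s)| == 2%N then
      take (find both s).-1 s ++
        (nth set0 s (find both s).-1 :|: nth set0 s (find both s)) :: drop (find both s).+1 s
    else take (find both s) s ++
        (nth set0 s (find both s) :\: DD) :: DD :: drop (find both s).+1 s)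
  else map swp s.

Lemma mem_swp x B : (x \in swp B) = (tau x \in B).
Proof. by rewrite -{1}(tpermK MM MM' x) /swp mem_imset //; exact: perm_inj. Qed.

Lemma swpK : cancel swp swp.
Proof. by move=> B; apply/setP => x; rewrite !mem_swp /tau tpermK. Qed.

Lemma both_swp B : both (swp B) = both B.
Proof. by rewrite /both !mem_swp /tau tpermL tpermR andbC. Qed.

Lemma valMM : nat_of_ord MM = m.+2. Proof. by []. Qed.
Lemma valMM' : nat_of_ord MM' = m.+1. Proof. by []. Qed.
Lemma neqMM (z : 'I_n) : z <> MM -> nat_of_ord z <> m.+2.
Proof. by move=> h e; apply: h; apply: val_inj. Qed.
Lemma neqMM' (z : 'I_n) : z <> MM' -> nat_of_ord z <> m.+1.
Proof. by move=> h e; apply: h; apply: val_inj. Qed.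

Lemma blk_swp B : ~~ both B -> blk (swp B) = map tau (blk B).
Proof.
move=> nb; apply: blk_eq.
  apply: (@homo_sorted_in _ _ (mem B)); last exact: sorted_blk.
    move=> x y xB0 yB0; rewrite /ltI /tau.
    have xB : x \in B := xB0; have yB : y \in B := yB0; clear xB0 yB0.
    have lx := ltn_ord x; have ly := ltn_ord y.
    case: tpermP => [ex|ex|nx1 nx2]; case: tpermP => [ey|ey|ny1 ny2];
      subst; rewrite ?valMM ?valMM' //=; try lia.
    - by case/negP: nb; apply/andP.
    - by have := neqMM ny1; lia.
    - by have := neqMM' nx2; lia.
  by apply/allP => x; rewrite mem_blk.
move=> x; rewrite -{1}(tpermK MM MM' x) (mem_map (@perm_inj _ tau)) mem_blk.
by rewrite mem_swp.
Qed.

Lemma bwS_swp s : ~~ has both s -> bwS (map swp s) = map tau (bwS s).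
Proof.
elim: s => [|B s IH] //=; rewrite negb_or => /andP[nb ns].
by rewrite !bwS_cons IH // map_cat blk_swp.
Qed.

Definition inB s := [&& partS s, oddcnt s & x0 \in nth set0 s 0].

Lemma swap_case s : inB s -> ~~ has both s ->
  [/\ inB (map swp s), invol (map swp s) = s & FS R (map swp s) = - FS R s].
Proof.
move=> /and3P[ps os hs] nb.
have iswp : injective swp := can_inj swpK.
have tx0 : tau x0 = x0.
  by rewrite /tau tpermD // ; apply/eqP => /(congr1 val).
split.
- apply/and3P; split.
  + case/andP: ps => p0 /forallP pc; apply/andP; split.
      have -> : (set0 : {set 'I_n}) = swp set0 by rewrite /swp imset0.
      by rewrite (mem_map iswp).
    apply/forallP => x; rewrite count_map.
    rewrite (eq_count (a2 := fun B : {set 'I_n} => tau x \in B)) ?pc //.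
    by move=> B /=; rewrite mem_swp.
  + rewrite /oddcnt count_map (eq_count (a2 := fun B : {set 'I_n} => odd #|B|)) //.
    by move=> B /=; rewrite /swp card_imset //; exact: perm_inj.
  + case: s ps hs {os nb} => [|B s] //= _; by rewrite mem_swp tx0.
- rewrite /invol has_map.
  have -> : has (preim swp both) s = has both s by apply: eq_has => B; rewrite /= both_swp.
  by rewrite (negbTE nb) -map_comp map_id_in // => B _; rewrite /= swpK.
rewrite /FS size_map bwS_swp // epsW_tperm ?MM_neq ?part_perm //.
have -> : eps'S R (map swp s) = eps'S R s.
  rewrite /eps'S big_map; congr (_ ^+ _); congr (_./2); apply: eq_bigr => B _.
  by rewrite /swp card_imset //; exact: perm_inj.
by rewrite mulrN mulNr.
Qed.

Lemma count_mid (p : pred {set 'I_n}) pre A post :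
  count p (pre ++ A :: post) = (count p pre + p A + count p post)%N.
Proof. by rewrite count_cat /= addnA. Qed.

Lemma part_notin pre A post x : partS (pre ++ A :: DD :: post) ->
  x \in DD -> x \notin A.
Proof.
case/andP => _ /forallP /(_ x) /eqP; rewrite count_cat /= => e xD.
apply/negP => xA; move: e; rewrite xA xD; lia.
Qed.

Lemma part_nonset0 pre A post : partS (pre ++ A :: post) -> A != set0.
Proof.
case/andP => h _; apply: contraNneq h => <-.
by rewrite mem_cat inE eqxx orbT.
Qed.

Lemma find_mid pre X post : ~~ has both pre -> both X ->
  find both (pre ++ X :: post) = size pre.
Proof. by move=> h1 h2; rewrite find_cat (negbTE h1) /= h2 addn0. Qed.

Lemma MMD : MM \in DD. Proof. by rewrite !inE eqxx. Qed.
Lemma MM'D : MM' \in DD. Proof. by rewrite !inE eqxx orbT. Qed.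

Lemma merge_form pre A post : A != set0 -> MM \notin A -> MM' \notin A ->
  ~~ has both pre ->
  invol (pre ++ A :: DD :: post) = pre ++ (A :|: DD) :: post.
Proof.
move=> A0 hM hM' hp.
have bA : ~~ both A by rewrite /both (negbTE hM).
have hs : has both (pre ++ A :: DD :: post).
  apply/hasP; exists DD; last by rewrite /both MMD MM'D.
  by rewrite mem_cat !inE eqxx !orbT.
rewrite /invol hs.
have -> : find both (pre ++ A :: DD :: post) = (size pre).+1.
  by rewrite find_cat (negbTE hp) /= (negbTE bA) /both MMD MM'D addn1.
have nA : nth set0 (pre ++ A :: DD :: post) (size pre) = A by rewrite nth_cat ltnn subnn.
have nD : nth set0 (pre ++ A :: DD :: post) (size pre).+1 = DD.
  by rewrite nth_cat ltnNge leqnSn /= subSnn.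
rewrite nD card_D eqxx /= nA take_size_cat //.
have -> : pre ++ [:: A, DD & post] = (pre ++ [:: A; DD]) ++ post by rewrite -catA.
by rewrite drop_size_cat // size_cat /= addn2.
Qed.

Lemma split_form pre A post : A != set0 -> MM \notin A -> MM' \notin A ->
  ~~ has both pre ->
  invol (pre ++ (A :|: DD) :: post) = pre ++ A :: DD :: post.
Proof.
move=> A0 hM hM' hp.
have bU : both (A :|: DD) by rewrite /both !inE !eqxx /= !orbT.
have hs : has both (pre ++ (A :|: DD) :: post) by rewrite has_cat /= bU orbT.
rewrite /invol hs find_mid // nth_cat ltnn subnn /=.
have cU : #|A :|: DD| = (#|A| + 2)%N.
  rewrite cardsU card_D; suff -> : A :&: DD = set0 by rewrite cards0 subn0.
  apply/setP => x; rewrite !inE; case: eqP => [->|_]; first by rewrite (negbTE hM).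
  by case: eqP => [->|_]; [rewrite (negbTE hM') | rewrite andbF].
have -> : (#|A :|: DD| == 2%N) = false.
  by apply/negbTE; rewrite cU; move: A0; rewrite -card_gt0; lia.
rewrite take_size_cat //.
have -> : pre ++ (A :|: DD) :: post = (pre ++ [:: A :|: DD]) ++ post by rewrite -catA.
rewrite drop_size_cat ?size_cat ?addn1 //.
have -> : (A :|: DD) :\: DD = A.
  apply/setP => x; rewrite !inE.
  case: eqP => [->|_]; first by rewrite (negbTE hM).
  case: eqP => [->|_]; first by rewrite (negbTE hM').
  by rewrite /= orbF.
by [].
Qed.

Lemma both_case s : inB s -> has both s ->
  [/\ inB (invol s), invol (invol s) = s & FS R (invol s) = - FS R s].
Proof.
move=> ins hb; have /and3P[ps os hs] := ins.
set i := find both s.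
have is_ : (i < size s)%N by rewrite -has_find.
set B := nth set0 s i.
have bB : both B by exact: nth_find.
have es : s = take i s ++ B :: drop i.+1 s by rewrite -drop_nth // cat_take_drop.
have hp : forall j, (j <= i)%N -> ~~ has both (take j s).
  move=> j ji; rewrite has_take_leq; last by apply: leq_trans (ltnW is_).
  by rewrite -leqNgt.
have DB : DD \subset B.
  by apply/subsetP => x; rewrite !inE => /orP[] /eqP ->; case/andP: bB.
rewrite /invol hb -/i -/B.
case: ifP => c2.
- have BD : B = DD.
    apply/eqP; rewrite eq_sym eqEcard DB card_D.
    by rewrite (eqP c2).
  have i0 : i != 0%N.
    apply/eqP => i0; move: hs; rewrite es i0 take0 /= -/B BD => h.
    by move: x0_notin_D; rewrite h.
  have [i' ei] : exists i', i = i'.+1 by exists i.-1; rewrite prednK // lt0n.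
  rewrite ei /=.
  set A := nth set0 s i'.
  have es' : s = take i' s ++ A :: DD :: drop i.+1 s.
    rewrite -BD /B ei -drop_nth; last by rewrite -ei.
    by rewrite -drop_nth ?cat_take_drop // ltnW // -ei.
  rewrite -ei -/B BD.
  have pp : partS (take i' s ++ A :: DD :: drop i.+1 s) by rewrite -es'.
  have hM := part_notin pp MMD; have hM' := part_notin pp MM'D.
  have A0 : A != set0 by apply: (@part_nonset0 (take i' s) A (DD :: drop i.+1 s)).
  have [e1 e2 e3 e4] := MR (take i' s) (drop i.+1 s) A0 hM hM'.
  split.
  + by move: ins; rewrite /inB {1 2 3}es' e1 e2 e3.
  + rewrite -/(invol (take i' s ++ (A :|: DD) :: drop i.+1 s)).
    by rewrite split_form //; apply: hp; rewrite ei.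
  + by rewrite e4 -es'.
- set A := B :\: DD.
  have hM : MM \notin A by rewrite /A in_setD MMD.
  have hM' : MM' \notin A by rewrite /A in_setD MM'D.
  have A0 : A != set0.
    rewrite -card_gt0 /A cardsD.
    have -> : B :&: DD = DD by apply/setIidPr.
    rewrite card_D; have := subset_leq_card DB; rewrite card_D.
    by move: c2; case: #|B| => [|[|[|]]].
  have UB : A :|: DD = B.
    apply/setP => x; rewrite /A in_setU in_setD; case xD: (x \in DD).
      by rewrite orbT (subsetP DB).
    by rewrite orbF.
  have es2 : s = take i s ++ (A :|: DD) :: drop i.+1 s by rewrite UB.
  have [e1 e2 e3 e4] := MR (take i s) (drop i.+1 s) A0 hM hM'.
  split.
  + by move: ins; rewrite /inB {1 2 3}es2 -e1 -e2 -e3.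
  + rewrite -/(invol (take i s ++ A :: DD :: drop i.+1 s)).
    rewrite merge_form //; last exact: hp.
  + by rewrite [in RHS]es2 e4 opprK.
Qed.

Lemma step2 (L : seq (seq {set 'I_n})) :
  uniq L -> (forall s, (s \in L) = (size s <= n)%N) ->
  \sum_(s <- L | inB s) FS R s = 0.
Proof.
move=> uL Lm; apply: (@sum_invol R _ L inB (@FS R n) invol) => // s sL ins.
have fin : forall t, inB t -> t \in L.
  by move=> t /and3P[pt _ _]; rewrite Lm; apply: part_size pt.
case hb : (has both s).
  have [h1 h2 h3] := both_case ins hb; split => //; exact: fin.
have [h1 h2 h3] := swap_case ins (negbT hb).
have ei : invol s = map swp s by rewrite /invol hb.
by rewrite ei; split => //; exact: fin.
Qed.

End Invol.

Definition Lk n k : seq (seq {set 'I_n}) :=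
  map (@tval k {set 'I_n}) (enum {: k.-tuple {set 'I_n}}).

Lemma mem_Lk n k s : (s \in Lk n k) = (size s == k).
Proof.
apply/mapP/idP => [[P _ ->]|/eqP h]; first by rewrite size_tuple.
have h' : size s == k by rewrite h.
by exists (Tuple h'); rewrite ?mem_enum.
Qed.

Lemma uniq_Lk n k : uniq (Lk n k).
Proof. by rewrite map_inj_uniq ?enum_uniq //; exact: val_inj. Qed.

Definition LL n N := flatten [seq Lk n k | k <- iota 0 N].

Lemma mem_LL n N s : (s \in LL n N) = (size s < N)%N.
Proof.
apply/flatten_mapP/idP => [[k] | h].
  by rewrite mem_iota add0n /= => kN; rewrite mem_Lk => /eqP ->.
by exists (size s); rewrite ?mem_iota ?mem_Lk //.
Qed.

Lemma uniq_LL n N : uniq (LL n N).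
Proof.
rewrite /LL; have : uniq (iota 0 N) by apply: iota_uniq.
elim: (iota 0 N) => [|k ks IH] //= /andP[kks uks].
rewrite cat_uniq uniq_Lk IH // andbT /=.
apply/hasP => -[s /flatten_mapP [k' k'ks]]; rewrite !mem_Lk => /eqP e1 /eqP e2.
by move: kks; rewrite -e2 e1 k'ks.
Qed.

Unset Implicit Arguments. Set Strict Implicit. Set Printing Implicit Defensive.

Theorem mainTheorem9 (R : realFieldType) (n : nat) (lam : 'I_n -> R) :
  (3 <= n)%N ->
  0 < \sum_(i < n) lam i ->
  Nlam lam = n ->
  \sum_(k < n.+1) \sum_(P : k.-tuple {set 'I_n} | in_P0ord lam P)
     ((-1) ^+ k * eps R P * eps' R P) = 0 :> R.
Proof.
move=> n3 Spos HN.
have Gen := gen_of_N Spos HN.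
have E : forall k, \sum_(P : k.-tuple {set 'I_n} | in_P0ord lam P)
     ((-1) ^+ k * eps R P * eps' R P) =
     \sum_(s <- Lk n k | okS lam s) FS R s.
  move=> k; rewrite /Lk big_map big_enum_cond /=.
  apply: eq_big => [P|P _]; first by rewrite in_P0ord_tuple.
  exact: FS_tuple.
under eq_bigr => k _ do rewrite E.
rewrite -(big_mkord xpredT (fun k => \sum_(s <- Lk n k | okS lam s) FS R s)).
rewrite -(big_map (fun k => Lk n k) xpredT (fun l => \sum_(s <- l | okS lam s) FS R s)).
rewrite -big_flatten /= -/(LL n n.+1).
rewrite (eq_bigl (fun s => [&& partS s, posS lam s & oddcnt s])); last first.
  by move=> s; rewrite okS_char.
clear E; case: n lam n3 Spos HN Gen => [|[|[|m]]] // lam _ Spos HN Gen.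
rewrite (@step1 R m.+2 lam (x0 m) Spos Gen (LL m.+3 m.+4)) ?uniq_LL //; last first.
  by move=> s; rewrite mem_LL.
apply: (@step2 R m (LL m.+3 m.+4)); first exact: uniq_LL.
by move=> s; rewrite mem_LL.
Qed.
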